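(* Let $\Theta$ be a compact subset of $(0,1/2)\times(\mathbb{R}^2\setminus\Delta)$, $\Delta=\{(x,x):x\in\mathbb{R}\}$, and let $P<1/2$ be such that $p\le P$ for all $(p,\alpha,\beta)\in\Theta$. Let $X_1,\dots,X_n$ be real numbers. For $\theta=(p,\alpha,\beta)\in\Theta$, $u\in\mathbb{R}$, let $M(\theta,u)=pe^{iu\alpha}+(1-p)e^{iu\beta}$ and $$Z_k(\theta,u)=\frac{e^{iuX_k}}{M(\theta,u)}-\frac{e^{-iuX_k}}{M(\theta,-u)},$$ with $\dot Z_k$ and $\ddot Z_k$ its gradient and Hessian with respect to $\theta$. Then there is an absolute constant $C>0$ such that for all $u\in\mathbb{R}$, all $\theta,\theta'\in\Theta$ and all $k\in\{1,\dots,n\}$: 1. $\|\dot Z_k(\theta,u)-\dot Z_k(\theta',u)\|\le\|\theta-\theta'\|\cdot\frac{C(1+|u|+u^2)}{(1-2P)^3}$; 2. $\|\ddot Z_k(\theta,u)-\ddot Z_k(\theta',u)\|_2\le\|\theta-\theta'\|\cdot\frac{C(1+|u|+u^2+|u|^3)}{(1-2P)^4}$.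
   Context: $\|v\|$ is the Euclidean (Hermitian) norm of a vector and $\|A\|_2^2=\mathrm{tr}(A^\top A)$ for a matrix $A$. *)

(* Defs.v *)
From mathcomp Require Import all_boot all_order all_algebra.
From mathcomp Require Import all_classical all_reals all_analysis.
From mathcomp Require Import complex.
Import Order.TTheory GRing.Theory Num.Theory.
Import numFieldNormedType.Exports.
Local Open Scope ring_scope.
Local Open Scope complex_scope.

Definition ip {R : realType} (th : 'rV[R]_3) : R := th 0 0.
Definition ialpha {R : realType} (th : 'rV[R]_3) : R := th 0 1.
Definition ibeta {R : realType} (th : 'rV[R]_3) : R := th 0 2.

Definition expi {R : realType} (t : R) : R[i] := cos t +i* sin t.

Definition RtoC {R : realType} (x : R) : R[i] := x +i* 0.

Definition Mth {R : realType} (th : 'rV[R]_3) (u : R) : R[i] :=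
  RtoC (ip th) * expi (u * ialpha th) + RtoC (1 - ip th) * expi (u * ibeta th).

Definition Zfun {R : realType} (x : R) (th : 'rV[R]_3) (u : R) : R[i] :=
  expi (u * x) / Mth th u - expi (- u * x) / Mth th (- u).

Definition pderiv {R : realType} (i : 'I_3) (f : 'rV[R]_3 -> R[i]) (th : 'rV[R]_3) : R[i] :=
  ('D_('e_i) (fun t => complex.Re (f t)) th) +i* ('D_('e_i) (fun t => complex.Im (f t)) th).

Definition grad {R : realType} (f : 'rV[R]_3 -> R[i]) (th : 'rV[R]_3) : 'rV[R[i]]_3 :=
  \row_j pderiv j f th.
Definition hess {R : realType} (f : 'rV[R]_3 -> R[i]) (th : 'rV[R]_3) : 'M[R[i]]_3 :=
  \matrix_(j, l) pderiv l (pderiv j f) th.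

Definition cmod2 {R : realType} (z : R[i]) : R := complex.Re z ^+ 2 + complex.Im z ^+ 2.

Definition enorm {R : realType} (v : 'rV[R]_3) : R := Num.sqrt (\sum_j v 0 j ^+ 2).
Definition hnorm {R : realType} (v : 'rV[R[i]]_3) : R := Num.sqrt (\sum_j cmod2 (v 0 j)).
Definition fnorm {R : realType} (A : 'M[R[i]]_3) : R :=
  Num.sqrt (\sum_j \sum_l cmod2 (A j l)).

(* Main.v *)
Require Import Defs.
From mathcomp Require Import all_boot all_order all_algebra.
From mathcomp Require Import all_classical all_reals all_analysis.
From mathcomp Require Import complex.
From mathcomp Require Import ring lra.
Import Order.TTheory GRing.Theory Num.Theory.
Import numFieldNormedType.Exports.
Local Open Scope ring_scope.
Local Open Scope complex_scope.

Set Implicit Arguments.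
Unset Strict Implicit.
Unset Printing Implicit Defensive.

Section S.
Variable R : realType.
Local Notation V := 'rV[R]_3.
Local Notation Re := complex.Re.
Local Notation Im := complex.Im.

Definition iC : R[i] := Complex 0 1.

Lemma ReD (a b : R[i]) : Re (a + b) = Re a + Re b. Proof. by case: a; case: b. Qed.
Lemma ImD (a b : R[i]) : Im (a + b) = Im a + Im b. Proof. by case: a; case: b. Qed.
Lemma ReN (a : R[i]) : Re (- a) = - Re a. Proof. by case: a. Qed.
Lemma ImN (a : R[i]) : Im (- a) = - Im a. Proof. by case: a. Qed.
Lemma ReM (a b : R[i]) : Re (a * b) = Re a * Re b - Im a * Im b. Proof. by case: a; case: b. Qed.
Lemma ImM (a b : R[i]) : Im (a * b) = Re a * Im b + Im a * Re b. Proof. by case: a => ? ?; case: b => ? ? /=. Qed.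
Lemma ReV (a : R[i]) : Re (a^-1) = Re a / (Re a ^+ 2 + Im a ^+ 2). Proof. by case: a. Qed.
Lemma ImV (a : R[i]) : Im (a^-1) = - (Im a / (Re a ^+ 2 + Im a ^+ 2)). Proof. by case: a. Qed.

Lemma is_deriveV' (f : V -> R) x v df : f x != 0 -> is_derive x v f df ->
  is_derive x v (fun y => (f y)^-1) (- (f x) ^- 2 *: df).
Proof.
move=> fx0 [d1 d2]; apply: DeriveDef; first exact: derivableV.
by rewrite deriveV // d2.
Qed.

Arguments is_deriveV' {f x v df}.
Lemma scR (a b : R) : a *: b = a * b. Proof. by []. Qed.



Lemma isD_add (f g : V -> R) x v df dg : is_derive x v f df -> is_derive x v g dg ->
  is_derive x v (fun t => f t + g t) (df + dg).
Proof. move=> H1 H2; exact: (is_deriveD H1 H2). Qed.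
Lemma isD_opp (f : V -> R) x v df : is_derive x v f df ->
  is_derive x v (fun t => - f t) (- df).
Proof. move=> H1; exact: (is_deriveN H1). Qed.
Lemma isD_mul (f g : V -> R) x v df dg : is_derive x v f df -> is_derive x v g dg ->
  is_derive x v (fun t => f t * g t) (f x * dg + g x * df).
Proof. move=> H1 H2; exact: (is_deriveM H1 H2). Qed.
Arguments isD_add {f g x v df dg}.
Arguments isD_opp {f x v df}.
Arguments isD_mul {f g x v df dg}.

Definition cD (x v : V) (F : V -> R[i]) (d : R[i]) :=
  is_derive x v (fun t => Re (F t)) (Re d) /\ is_derive x v (fun t => Im (F t)) (Im d).

Lemma cD_cst x v (c : R[i]) : cD x v (fun _ => c) 0.
Proof. by split; exact: is_derive_cst. Qed.

Lemma cD_add x v F G dF dG : cD x v F dF -> cD x v G dG ->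
  cD x v (fun t => F t + G t) (dF + dG).
Proof.
move=> [F1 F2] [G1 G2]; split.
  have -> : (fun t => Re (F t + G t)) = (fun t => Re (F t) + Re (G t)).
    by apply: funext => t; rewrite ReD.
  by rewrite ReD; apply: isD_add.
have -> : (fun t => Im (F t + G t)) = (fun t => Im (F t) + Im (G t)).
  by apply: funext => t; rewrite ImD.
by rewrite ImD; apply: isD_add.
Qed.

Lemma cD_opp x v F dF : cD x v F dF -> cD x v (fun t => - F t) (- dF).
Proof.
move=> [F1 F2]; split.
  have -> : (fun t => Re (- F t)) = (fun t => - Re (F t)).
    by apply: funext => t; rewrite ReN.
  by rewrite ReN; apply: isD_opp.
have -> : (fun t => Im (- F t)) = (fun t => - Im (F t)).
  by apply: funext => t; rewrite ImN.
by rewrite ImN; apply: isD_opp.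
Qed.

Lemma cD_sub x v F G dF dG : cD x v F dF -> cD x v G dG ->
  cD x v (fun t => F t - G t) (dF - dG).
Proof. by move=> HF HG; apply: cD_add => //; apply: cD_opp. Qed.

Lemma cD_mul x v F G dF dG : cD x v F dF -> cD x v G dG ->
  cD x v (fun t => F t * G t) (dF * G x + F x * dG).
Proof.
move=> [F1 F2] [G1 G2]; split.
  have -> : (fun t => Re (F t * G t)) = (fun t => Re (F t) * Re (G t)
     + - (Im (F t) * Im (G t))).
    by apply: funext => t; rewrite ReM.
  have H := isD_add (isD_mul F1 G1) (isD_opp (isD_mul F2 G2)); apply: (is_derive_eq H).
  rewrite ReD !ReM; ring.
have -> : (fun t => Im (F t * G t)) = (fun t => Re (F t) * Im (G t)
     + Im (F t) * Re (G t)).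
  by apply: funext => t; rewrite ImM.
have H := isD_add (isD_mul F1 G2) (isD_mul F2 G1); apply: (is_derive_eq H).
rewrite ImD !ImM; ring.
Qed.


Lemma isD_inv (f : V -> R) x v df : f x != 0 -> is_derive x v f df ->
  is_derive x v (fun t => (f t)^-1) (- (f x * f x)^-1 * df).
Proof. by move=> H1 H2; apply: (is_derive_eq (is_deriveV' H1 H2)); rewrite scR expr2. Qed.
Arguments isD_inv {f x v df}.

Lemma cnorm_neq0 {z : R[i]} : z != 0 -> Re z * Re z + Im z * Im z != 0.
Proof.
case: z => a b /= H; apply/negP => /eqP E; move/negP: H; apply.
have Ha : a * a = 0 by nra.
have Hb : b * b = 0 by nra.
by move/eqP: Ha; rewrite mulf_eq0 orbb => /eqP ->; move/eqP: Hb; rewrite mulf_eq0 orbb => /eqP ->.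
Qed.

Lemma side_inv (a b : R) : a * a + b * b != 0 ->
  ((a * a - b * b) ^+ 2 + (a * b + b * a) ^+ 2 != 0) && (a * a + b * b != 0).
Proof.
move=> N0; rewrite N0 andbT.
have -> : (a * a - b * b) ^+ 2 + (a * b + b * a) ^+ 2 = (a * a + b * b) ^+ 2 by ring.
by rewrite expf_neq0.
Qed.

Lemma cD_inv x v F dF : F x != 0 -> cD x v F dF ->
  cD x v (fun t => (F t)^-1) (- dF * (F x * F x)^-1).
Proof.
move=> Fx0 [F1 F2].
have N0 := cnorm_neq0 Fx0.
have HN := isD_add (isD_mul F1 F1) (isD_mul F2 F2).
have HNi := isD_inv N0 HN.
split.
  have -> : (fun t => Re ((F t)^-1)) = (fun t => Re (F t) * (Re (F t) * Re (F t) + Im (F t) * Im (F t))^-1).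
    by apply: funext => t; rewrite ReV !expr2.
  apply: (is_derive_eq (isD_mul F1 HNi)).
    rewrite !(ReM, ImM, ReV, ImV, ReN, ImN, ReD, ImD) /=.
  field; exact: side_inv N0.
have -> : (fun t => Im ((F t)^-1)) = (fun t => - (Im (F t) * (Re (F t) * Re (F t) + Im (F t) * Im (F t))^-1)).
  by apply: funext => t; rewrite ImV !expr2.
apply: (is_derive_eq (isD_opp (isD_mul F2 HNi))).
rewrite !(ReM, ImM, ReV, ImV, ReN, ImN, ReD, ImD) /=.
field; exact: side_inv N0.
Qed.
Lemma line_fun (F : V -> R) (x v : V) :
  (fun h : R => h^-1 *: ((F \o shift x) (h *: v) - F x)) =
  (fun h : R => h^-1 *: (((fun s : R => F (s *: v + x)) \o shift 0) (h *: 1) - (fun s : R => F (s *: v + x)) 0)).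
Proof.
apply: funext => h /=. by rewrite addr0 scale0r add0r [h%:A]mulr1.
Qed.

Lemma is_derive_line (F : V -> R) (x v : V) d :
  is_derive x v F d <-> is_derive (0:R) 1 (fun s => F (s *: v + x)) d.
Proof.
split=> -[H1 H2]; (apply: DeriveDef; [move: H1|move: H2]);
 by rewrite /derivable /derive line_fun.
Qed.

Lemma is_derive_coord (x v : V) j : is_derive x v (fun t : V => t 0 j) (v 0 j).
Proof.
apply/is_derive_line.
have -> : (fun s : R => (s *: v + x) 0 j) = (fun s => s * v 0 j + x 0 j).
  by apply: funext => s; rewrite !mxE.
have -> : (fun s : R => s * v 0 j + x 0 j) = ((@id R) * cst (v 0 j)) + cst (x 0 j).
  by apply: funext => s.
apply: is_derive_eq. by rewrite /= scaler0 addr0 add0r [_%:A]mulr1.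
Qed.


Lemma isD_cos (g : V -> R) x v dg : is_derive x v g dg ->
  is_derive x v (fun t => cos (g t)) (- sin (g x) * dg).
Proof.
move=> /is_derive_line H; apply/is_derive_line.
have := is_derive1_comp (is_derive_cos _) H.
by rewrite /= scale0r add0r.
Qed.

Lemma isD_sin (g : V -> R) x v dg : is_derive x v g dg ->
  is_derive x v (fun t => sin (g t)) (cos (g x) * dg).
Proof.
move=> /is_derive_line H; apply/is_derive_line.
have := is_derive1_comp (is_derive_sin _) H.
by rewrite /= scale0r add0r.
Qed.
Arguments isD_cos {g x v dg}.
Arguments isD_sin {g x v dg}.

Lemma cD_RtoC x v (g : V -> R) dg : is_derive x v g dg ->
  cD x v (fun t => RtoC (g t)) (RtoC dg).
Proof. by move=> H; split => //=; exact: is_derive_cst. Qed.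

Lemma cD_expi x v (g : V -> R) dg : is_derive x v g dg ->
  cD x v (fun t => expi (g t)) (iC * expi (g x) * RtoC dg).
Proof.
move=> H; split.
  apply: (is_derive_eq (isD_cos H)).
  by rewrite /expi /RtoC /=; ring.
apply: (is_derive_eq (isD_sin H)).
by rewrite /expi /RtoC /=; ring.
Qed.

Lemma pderiv_cD (i : 'I_3) F th d : cD th 'e_i F d -> pderiv i F th = d.
Proof. by rewrite /pderiv => -[[_ ->] [_ ->]]; case: d. Qed.

Lemma cD_eq x v F d d' : cD x v F d -> d = d' -> cD x v F d'.
Proof. by move=> H <-. Qed.

Lemma isD_lin (c : R) (x v : V) j : is_derive x v (fun t : V => c * t 0 j) (c * v 0 j).
Proof.
apply: (is_derive_eq (isD_mul (is_derive_cst c x v) (is_derive_coord x v j))).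
by rewrite mulr0 addr0.
Qed.

Lemma isD_1m (x v : V) : is_derive x v (fun t : V => 1 - t 0 0) (- v 0 0).
Proof.
apply: (is_derive_eq (isD_add (is_derive_cst (1:R) x v) (isD_opp (is_derive_coord x v 0)))).
by rewrite add0r.
Qed.

Lemma near_p (th : V) : ip th < 1 / 2 -> \forall t \near th, ip t < 1 / 2.
Proof.
move=> H.
have HN : nbhs (th 0 0) (fun z : R => z < 1 / 2).
  by apply: open_nbhs_nbhs; split; [exact: open_lt | exact: H].
exact: (@coord_continuous _ _ _ 0 0 th _ HN).
Qed.

Definition nc (z : R[i]) : R := @Normc.normc R z.
Lemma nc_ge0 (z : R[i]) : 0 <= nc z. Proof. by case: z => a b; exact: sqrtr_ge0. Qed.
Lemma nc_RtoC a : nc (RtoC a) = `|a|.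
Proof. by rewrite /RtoC /= expr0n /= addr0 sqrtr_sqr. Qed.
Lemma nc_expi a : nc (expi a) = 1.
Proof. by rewrite /expi /= cos2Dsin2 sqrtr1. Qed.
Lemma nc_i : nc iC = 1.
Proof. by rewrite /= expr0n expr1n add0r sqrtr1. Qed.
Lemma nc_M (a b : R[i]) : nc (a * b) = nc a * nc b. Proof. exact: Normc.normcM. Qed.
Lemma nc_V (a : R[i]) : nc (a^-1) = (nc a)^-1. Proof. exact: Normc.normcV. Qed.
Lemma nc_D (a b : R[i]) : nc (a + b) <= nc a + nc b. Proof. exact: le_normcD. Qed.
Lemma nc_N (a : R[i]) : nc (- a) = nc a. Proof. exact: normcN. Qed.
Lemma nc_B (a b : R[i]) : nc (a - b) <= nc a + nc b.
Proof. by rewrite -(nc_N b); exact: nc_D. Qed.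
Lemma nc_lower (a b : R[i]) : nc b - nc a <= nc (a + b).
Proof.
have := nc_D (a + b) (- a); rewrite addrC addKr nc_N => H.
by rewrite lerBlDr.
Qed.
Lemma nc_eq0 (a : R[i]) : nc a = 0 -> a = 0. Proof. exact: Normc.eq0_normc. Qed.

Arguments cD_add {x v F G dF dG}.
Arguments cD_opp {x v F dF}.
Arguments cD_sub {x v F G dF dG}.
Arguments cD_mul {x v F G dF dG}.
Arguments cD_inv {x v F dF}.
Arguments cD_RtoC {x v g dg}.
Arguments cD_expi {x v g dg}.
Arguments cD_eq {x v F d d'}.
Definition Af (u : R) (t : V) : R[i] := expi (u * ialpha t).
Definition Bf (u : R) (t : V) : R[i] := expi (u * ibeta t).
Definition Mf (u : R) (t : V) : R[i] := RtoC (ip t) * Af u t + RtoC (1 - ip t) * Bf u t.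
Definition DA (u : R) (t v : V) : R[i] := iC * Af u t * RtoC (u * v 0 1).
Definition DB (u : R) (t v : V) : R[i] := iC * Bf u t * RtoC (u * v 0 2).
Definition DM (u : R) (t v : V) : R[i] := RtoC (v 0 0) * Af u t + RtoC (ip t) * DA u t v
   + (RtoC (- v 0 0) * Bf u t + RtoC (1 - ip t) * DB u t v).
Definition D2A (u : R) (t v w : V) : R[i] := iC * DA u t w * RtoC (u * v 0 1).
Definition D2B (u : R) (t v w : V) : R[i] := iC * DB u t w * RtoC (u * v 0 2).
Definition D2M (u : R) (t v w : V) : R[i] := RtoC (v 0 0) * DA u t w
   + (RtoC (w 0 0) * DA u t v + RtoC (ip t) * D2A u t v w)
   + (RtoC (- v 0 0) * DB u t w + (RtoC (- w 0 0) * DB u t v + RtoC (1 - ip t) * D2B u t v w)).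
Definition Wf (u : R) (t : V) : R[i] := (Mf u t)^-1.
Definition DW (u : R) (t v : V) : R[i] := - DM u t v * (Wf u t * Wf u t).
Definition D2W (u : R) (t v w : V) : R[i] := - D2M u t v w * (Wf u t * Wf u t)
   + 2 * DM u t v * DM u t w * (Wf u t * Wf u t * Wf u t).

Lemma cD_A u t v : cD t v (Af u) (DA u t v).
Proof. exact: (cD_expi (isD_lin u t v 1)). Qed.
Lemma cD_B u t v : cD t v (Bf u) (DB u t v).
Proof. exact: (cD_expi (isD_lin u t v 2)). Qed.

Lemma cD_M u t v : cD t v (Mf u) (DM u t v).
Proof.
exact: (cD_add (cD_mul (cD_RtoC (is_derive_coord t v 0)) (cD_A u t v))
               (cD_mul (cD_RtoC (isD_1m t v)) (cD_B u t v))).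
Qed.

Lemma cD_DA u t v w : cD t w (fun s => DA u s v) (D2A u t v w).
Proof.
apply: (cD_eq (cD_mul (cD_mul (cD_cst t w iC) (cD_A u t w)) (cD_cst t w (RtoC (u * v 0 1))))).
by rewrite /D2A; ring.
Qed.
Lemma cD_DB u t v w : cD t w (fun s => DB u s v) (D2B u t v w).
Proof.
apply: (cD_eq (cD_mul (cD_mul (cD_cst t w iC) (cD_B u t w)) (cD_cst t w (RtoC (u * v 0 2))))).
by rewrite /D2B; ring.
Qed.

Lemma cD_DM u t v w : cD t w (fun s => DM u s v) (D2M u t v w).
Proof.
apply: (cD_eq (cD_add
  (cD_add (cD_mul (cD_cst t w (RtoC (v 0 0))) (cD_A u t w))
          (cD_mul (cD_RtoC (is_derive_coord t w 0)) (cD_DA u t v w)))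
  (cD_add (cD_mul (cD_cst t w (RtoC (- v 0 0))) (cD_B u t w))
          (cD_mul (cD_RtoC (isD_1m t w)) (cD_DB u t v w))))).
rewrite /D2M; ring.
Qed.

Lemma Mf_neq0 u t : ip t < 1 / 2 -> Mf u t != 0.
Proof.
move=> Hp; apply/negP => /eqP H0.
have := nc_lower (RtoC (ip t) * Af u t) (RtoC (1 - ip t) * Bf u t).
rewrite -/(Mf u t) H0 !nc_M !nc_RtoC /Af /Bf !nc_expi !mulr1.
rewrite normr0.
have : `|ip t| < `|1 - ip t|.
  case: (lerP 0 (ip t)) => h.
    by rewrite !ger0_norm; lra.
  by rewrite ltr0_norm // ger0_norm; lra.
lra.
Qed.

Arguments Mf_neq0 u {t}.

Lemma cD_W u t v : ip t < 1 / 2 -> cD t v (Wf u) (DW u t v).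
Proof.
move=> Hp; apply: (cD_eq (cD_inv (Mf_neq0 u Hp) (cD_M u t v))).
by rewrite /DW /Wf invfM.
Qed.

Arguments cD_W u {t} v.

Lemma cD_DW u t v w : ip t < 1 / 2 -> cD t w (fun s => DW u s v) (D2W u t v w).
Proof.
move=> Hp.
have HW := cD_W u w Hp.
apply: (cD_eq (cD_mul (cD_opp (cD_DM u t v w)) (cD_mul HW HW))).
rewrite /D2W /DW; ring.
Qed.

Arguments cD_DW u {t} v w.

Definition dZ (x u : R) (t v : V) : R[i] :=
  expi (u * x) * DW u t v - expi (- u * x) * DW (- u) t v.
Definition d2Z (x u : R) (t v w : V) : R[i] :=
  expi (u * x) * D2W u t v w - expi (- u * x) * D2W (- u) t v w.

Lemma cD_Z x u t v : ip t < 1 / 2 -> cD t v (fun s => Zfun x s u) (dZ x u t v).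
Proof.
move=> Hp.
apply: (cD_eq (cD_sub (cD_mul (cD_cst t v (expi (u * x))) (cD_W u v Hp))
                      (cD_mul (cD_cst t v (expi (- u * x))) (cD_W (- u) v Hp)))).
rewrite /dZ; ring.
Qed.

Lemma cD_dZ x u t v w : ip t < 1 / 2 -> cD t w (fun s => dZ x u s v) (d2Z x u t v w).
Proof.
move=> Hp.
apply: (cD_eq (cD_sub (cD_mul (cD_cst t w (expi (u * x))) (cD_DW u v w Hp))
                      (cD_mul (cD_cst t w (expi (- u * x))) (cD_DW (- u) v w Hp)))).
rewrite /d2Z; ring.
Qed.

Lemma grad_Z x u t j : ip t < 1 / 2 ->
  pderiv j (fun s => Zfun x s u) t = dZ x u t 'e_j.
Proof. by move=> Hp; apply: pderiv_cD; apply: cD_Z. Qed.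

Lemma pderiv_near (i : 'I_3) (F G : V -> R[i]) th :
  (\forall s \near th, F s = G s) -> pderiv i F th = pderiv i G th.
Proof.
move=> H; rewrite /pderiv; congr (_ +i* _); apply: near_eq_derive;
  by apply: filterS H => s /= ->.
Qed.

Lemma hess_Z x u t j l : ip t < 1 / 2 ->
  pderiv l (pderiv j (fun s => Zfun x s u)) t = d2Z x u t 'e_j 'e_l.
Proof.
move=> Hp.
rewrite (@pderiv_near l _ (fun s => dZ x u s 'e_j)).
  by apply: pderiv_cD; apply: cD_dZ.
near=> s; rewrite grad_Z //; near: s; exact: near_p.
Unshelve. all: by end_near. Qed.
End S.

Unset Implicit Arguments.
Set Strict Implicit.
Local Close Scope complex_scope.

Section B.
Variable R : realType.
Local Notation V := 'rV[R]_3.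
Variables (P u : R).
Hypothesis P0 : 0 <= P.
Hypothesis P1 : P < 1 / 2.

Definition mm := 1 - 2 * P.
Definition UU := 1 + `|u|.
Definition iM := mm^-1.
Definition Q (a b : nat) := UU ^+ a * iM ^+ b.
Definition SS (t : V) := 0 <= ip t /\ ip t <= P.
Definition dd (t t' : V) := enorm (t - t').

Lemma mm_gt0 : 0 < mm. Proof. rewrite /mm. have h := P1. lra. Qed.
Lemma mm_le1 : mm <= 1. Proof. rewrite /mm; have h := P0; lra. Qed.
Lemma UU_ge1 : 1 <= UU. Proof. rewrite /UU; have := normr_ge0 u; lra. Qed.
Lemma iM_ge1 : 1 <= iM.
Proof. rewrite /iM -invr1 lef_pV2 ?posrE ?mm_gt0 ?ltr01 //; exact: mm_le1. Qed.
Lemma Q_ge0 a b : 0 <= Q a b.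
Proof.
rewrite /Q mulr_ge0 // exprn_ge0 //; [have := UU_ge1 | have := iM_ge1]; lra.
Qed.
Lemma Q_mono a b a' b' : (a <= a')%N -> (b <= b')%N -> Q a b <= Q a' b'.
Proof.
move=> ha hb; rewrite /Q; apply: ler_pM.
- by rewrite exprn_ge0 //; have := UU_ge1; lra.
- by rewrite exprn_ge0 //; have := iM_ge1; lra.
- exact: (ler_weXn2l UU_ge1).
- exact: (ler_weXn2l iM_ge1).
Qed.
Lemma QM a1 b1 a2 b2 : Q a1 b1 * Q a2 b2 = Q (a1 + a2) (b1 + b2).
Proof. by rewrite /Q !exprD; ring. Qed.
Lemma dd_ge0 t t' : 0 <= dd t t'. Proof. exact: sqrtr_ge0. Qed.

Definition bnd (f : V -> R[i]) (k a b : nat) := forall t, SS t -> nc (f t) <= k%:R * Q a b.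
Definition lip (f : V -> R[i]) (k a b : nat) :=
  forall t t', SS t -> SS t' -> nc (f t - f t') <= k%:R * Q a b * dd t t'.

Lemma bnd_w f k a b k' a' b' : bnd f k a b -> (k <= k')%N -> (a <= a')%N -> (b <= b')%N ->
  bnd f k' a' b'.
Proof.
move=> H hk ha hb t St; apply: (le_trans (H t St)); apply: ler_pM => //.
- exact: Q_ge0.
- by rewrite ler_nat.
- exact: Q_mono.
Qed.

Lemma lip_w f k a b k' a' b' : lip f k a b -> (k <= k')%N -> (a <= a')%N -> (b <= b')%N ->
  lip f k' a' b'.
Proof.
move=> H hk ha hb t t' St St'; apply: (le_trans (H t t' St St')).
apply: ler_wpM2r; first exact: dd_ge0.
apply: ler_pM => //.
- exact: Q_ge0.
- by rewrite ler_nat.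
- exact: Q_mono.
Qed.

Lemma bnd_add f g k1 k2 a b : bnd f k1 a b -> bnd g k2 a b ->
  bnd (fun t => f t + g t) (k1 + k2) a b.
Proof.
move=> Hf Hg t St; apply: (le_trans (nc_D _ _)).
by rewrite natrD mulrDl; apply: lerD; [exact: Hf|exact: Hg].
Qed.

Lemma lip_add f g k1 k2 a b : lip f k1 a b -> lip g k2 a b ->
  lip (fun t => f t + g t) (k1 + k2) a b.
Proof.
move=> Hf Hg t t' St St'.
have -> : f t + g t - (f t' + g t') = (f t - f t') + (g t - g t') by ring.
apply: (le_trans (nc_D _ _)).
by rewrite natrD !mulrDl; apply: lerD; [exact: Hf|exact: Hg].
Qed.

Lemma bnd_opp f k a b : bnd f k a b -> bnd (fun t => - f t) k a b.
Proof. by move=> Hf t St; rewrite nc_N; exact: Hf. Qed.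

Lemma lip_opp f k a b : lip f k a b -> lip (fun t => - f t) k a b.
Proof.
move=> Hf t t' St St'.
have -> : - f t - - f t' = - (f t - f t') by ring.
by rewrite nc_N; exact: Hf.
Qed.

Lemma bnd_mul f g k1 k2 a1 b1 a2 b2 : bnd f k1 a1 b1 -> bnd g k2 a2 b2 ->
  bnd (fun t => f t * g t) (k1 * k2) (a1 + a2) (b1 + b2).
Proof.
move=> Hf Hg t St; rewrite nc_M natrM -QM.
have -> : k1%:R * k2%:R * (Q a1 b1 * Q a2 b2) = (k1%:R * Q a1 b1) * (k2%:R * Q a2 b2) :> R by ring.
by apply: ler_pM; [exact: nc_ge0|exact: nc_ge0|exact: Hf|exact: Hg].
Qed.

Lemma lip_mul f g k1 k2 a1 b1 a2 b2 l1 c1 e1 l2 c2 e2 :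
  bnd f k1 a1 b1 -> bnd g k2 a2 b2 -> lip f l1 c1 e1 -> lip g l2 c2 e2 ->
  lip (fun t => f t * g t) (l1 * k2 + k1 * l2) (maxn (c1 + a2) (a1 + c2)) (maxn (e1 + b2) (b1 + e2)).
Proof.
move=> Bf Bg Lf Lg t t' St St'.
have -> : f t * g t - f t' * g t' = (f t - f t') * g t + f t' * (g t - g t') by ring.
apply: (le_trans (nc_D _ _)); rewrite !nc_M.
have h1 : nc (f t - f t') * nc (g t) <= (l1%:R * k2%:R * Q (maxn (c1 + a2) (a1 + c2)) (maxn (e1 + b2) (b1 + e2))) * dd t t'.
  apply: (le_trans (ler_pM (nc_ge0 _) (nc_ge0 _) (Lf t t' St St') (Bg t St))).
  have -> : l1%:R * Q c1 e1 * dd t t' * (k2%:R * Q a2 b2) = (l1%:R * k2%:R * (Q c1 e1 * Q a2 b2)) * dd t t' by ring.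
  rewrite QM; apply: ler_wpM2r; first exact: dd_ge0.
  apply: ler_wpM2l; first by rewrite mulr_ge0.
  by apply: Q_mono; rewrite ?leq_maxl ?leq_maxr.
have h2 : nc (f t') * nc (g t - g t') <= (k1%:R * l2%:R * Q (maxn (c1 + a2) (a1 + c2)) (maxn (e1 + b2) (b1 + e2))) * dd t t'.
  apply: (le_trans (ler_pM (nc_ge0 _) (nc_ge0 _) (Bf t' St') (Lg t t' St St'))).
  have -> : k1%:R * Q a1 b1 * (l2%:R * Q c2 e2 * dd t t') = (k1%:R * l2%:R * (Q a1 b1 * Q c2 e2)) * dd t t' by ring.
  rewrite QM; apply: ler_wpM2r; first exact: dd_ge0.
  apply: ler_wpM2l; first by rewrite mulr_ge0.
  by apply: Q_mono; rewrite ?leq_maxl ?leq_maxr.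
apply: (le_trans (lerD h1 h2)); rewrite natrD !natrM le_eqVlt; apply/orP; left; apply/eqP; ring.
Qed.


Arguments bnd_w {f k a b k' a' b'}.
Arguments lip_w {f k a b k' a' b'}.
Arguments bnd_add {f g k1 k2 a b}.
Arguments lip_add {f g k1 k2 a b}.
Arguments bnd_opp {f k a b}.
Arguments lip_opp {f k a b}.
Arguments bnd_mul {f g k1 k2 a1 b1 a2 b2}.
Arguments lip_mul {f g k1 k2 a1 b1 a2 b2 l1 c1 e1 l2 c2 e2}.

Lemma coord_le (v : V) k : `|v 0 k| <= enorm v.
Proof.
rewrite /enorm -sqrtr_sqr ler_sqrt; last by rewrite sumr_ge0 // => i _; exact: sqr_ge0.
rewrite (bigD1 k) //= lerDl sumr_ge0 // => i _; exact: sqr_ge0.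
Qed.

Lemma coord_dd (t t' : V) k : `|t 0 k - t' 0 k| <= dd t t'.
Proof. by have := coord_le (t - t') k; rewrite !mxE. Qed.

Lemma nc_le_ReIm (z : R[i]) : nc z <= `|complex.Re z| + `|complex.Im z|.
Proof.
case: z => x y; rewrite /nc /= -(@ger0_norm _ (`|x| + `|y|)); last by rewrite addr_ge0.
rewrite -sqrtr_sqr ler_sqrt; last by rewrite sqr_ge0.
have hx := real_normK (num_real x); have hy := real_normK (num_real y).
have ax := normr_ge0 x; have ay := normr_ge0 y.
rewrite sqrrD -hx -hy; have h := mulr_ge0 ax ay; lra.
Qed.

Lemma cos_lip_le (a b : R) : a <= b -> `|cos b - cos a| <= b - a.
Proof.
move=> ab.
have [c _ ->] := @MVT_segment R cos (fun x => - sin x) a b ab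
  (fun x _ => is_derive_cos x) (continuous_subspaceT (@continuous_cos R)).
rewrite normrM normrN (@ger0_norm _ (b - a)) ?subr_ge0 //.
apply: (@le_trans _ _ (1 * (b - a))); last by rewrite mul1r.
by apply: ler_wpM2r; [rewrite subr_ge0 | exact: sin_max].
Qed.

Lemma sin_lip_le (a b : R) : a <= b -> `|sin b - sin a| <= b - a.
Proof.
move=> ab.
have [c _ ->] := @MVT_segment R sin cos a b ab
  (fun x _ => is_derive_sin x) (continuous_subspaceT (@continuous_sin R)).
rewrite normrM (@ger0_norm _ (b - a)) ?subr_ge0 //.
apply: (@le_trans _ _ (1 * (b - a))); last by rewrite mul1r.
by apply: ler_wpM2r; [rewrite subr_ge0 | exact: cos_max].
Qed.

Lemma cos_lip (a b : R) : `|cos a - cos b| <= `|a - b|.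
Proof.
have n1 : a - b <= `|a - b| := ler_norm _.
have n2 : b - a <= `|a - b| by rewrite distrC ler_norm.
rewrite ler_norml; case: (lerP a b) => h.
  by move: (cos_lip_le _ _ h); rewrite ler_norml => /andP[H1 H2]; apply/andP; split; lra.
by move: (cos_lip_le _ _ (ltW h)); rewrite ler_norml => /andP[H1 H2]; apply/andP; split; lra.
Qed.

Lemma sin_lip (a b : R) : `|sin a - sin b| <= `|a - b|.
Proof.
have n1 : a - b <= `|a - b| := ler_norm _.
have n2 : b - a <= `|a - b| by rewrite distrC ler_norm.
rewrite ler_norml; case: (lerP a b) => h.
  by move: (sin_lip_le _ _ h); rewrite ler_norml => /andP[H1 H2]; apply/andP; split; lra.
by move: (sin_lip_le _ _ (ltW h)); rewrite ler_norml => /andP[H1 H2]; apply/andP; split; lra.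
Qed.

Lemma expi_lip (a b : R) : nc (expi a - expi b) <= 2 * `|a - b|.
Proof.
apply: (le_trans (nc_le_ReIm _)).
rewrite /expi /= mulr2n mulrDl mul1r.
by apply: lerD; [exact: cos_lip | exact: sin_lip].
Qed.

Lemma nc0 : nc (0 : R[i]) = 0. Proof. exact: Normc.normc0. Qed.

Lemma RtoCB (a b : R) : RtoC a - RtoC b = RtoC (a - b).
Proof. by rewrite /RtoC; apply/eqP; rewrite eq_complex /= subrr !eqxx. Qed.

Lemma Mf_lower w t : SS t -> mm <= nc (Mf w t).
Proof.
move=> [h0 h1].
have := nc_lower (RtoC (ip t) * Af w t) (RtoC (1 - ip t) * Bf w t).
rewrite -/(Mf w t) !nc_M !nc_RtoC /Af /Bf !nc_expi !mulr1.
rewrite (@ger0_norm _ (ip t)) // (@ger0_norm _ (1 - ip t)); last first.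
  by have := P1; lra.
rewrite /mm; have := P1; lra.
Qed.

Arguments Mf_lower w {t}.

Lemma Mf_nz w t : SS t -> Mf w t != 0.
Proof.
move=> St; apply/negP => /eqP H; have := Mf_lower w St; rewrite H.
rewrite nc0.
by have := mm_gt0; lra.
Qed.

Arguments Mf_nz w {t}.

Lemma bnd_W w : bnd (Wf w) 1 0 1.
Proof.
move=> t St; rewrite /Wf nc_V /Q expr0 expr1 !mul1r /iM.
rewrite lef_pV2 ?posrE ?mm_gt0 //; first exact: Mf_lower.
by apply: (lt_le_trans mm_gt0); exact: Mf_lower.
Qed.

Lemma lip_W w k a b : lip (Mf w) k a b -> lip (Wf w) k a (b + 2).
Proof.
move=> H t t' St St'.
have n1 := Mf_nz w St; have n2 := Mf_nz w St'.
have -> : Wf w t - Wf w t' = - (Mf w t - Mf w t') * (Wf w t * Wf w t').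
  by rewrite /Wf; field; rewrite n1 n2.
rewrite !nc_M nc_N.
have hW := bnd_W w t St; have hW' := bnd_W w t' St'.
rewrite /Q expr0 expr1 !mul1r in hW hW'.
apply: (le_trans (ler_pM (nc_ge0 _) _ (H t t' St St') (ler_pM (nc_ge0 _) (nc_ge0 _) hW hW'))).
  by rewrite mulr_ge0 // nc_ge0.
rewrite /Q exprD expr2; rewrite le_eqVlt; apply/orP; left; apply/eqP; ring.
Qed.

Lemma bnd_cst (c : R[i]) k a b : nc c <= k%:R * Q a b -> bnd (fun _ => c) k a b.
Proof. by move=> h t _. Qed.

Lemma lip_cst (c : R[i]) : lip (fun _ => c) 0 0 0.
Proof.
move=> t t' _ _; by rewrite subrr mul0r mul0r nc0.
Qed.

Arguments bnd_cst {c k a b}.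

Lemma nc_RtoC_le1 (x : R) : `|x| <= 1 -> nc (RtoC x) <= 1%:R * Q 0 0.
Proof. by rewrite nc_RtoC /Q !expr0 !mulr1. Qed.

Lemma nc_RtoC_leU (w x : R) : `|w| <= `|u| -> `|x| <= 1 -> nc (RtoC (w * x)) <= 1%:R * Q 1 0.
Proof.
move=> hw hx; rewrite nc_RtoC /Q expr0 expr1 !mulr1 mul1r normrM /UU.
have := normr_ge0 w; have := normr_ge0 x; nra.
Qed.

Lemma nc_iC_le : nc (iC R) <= 1%:R * Q 0 0.
Proof. by rewrite nc_i /Q !expr0 !mulr1. Qed.

Lemma nc_expi_le a : nc (expi a) <= 1%:R * Q 0 0.
Proof. by rewrite nc_expi /Q !expr0 !mulr1. Qed.

Lemma bnd_p : bnd (fun t => RtoC (ip t)) 1 0 0.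
Proof. move=> t [h0 h1]; apply: nc_RtoC_le1; rewrite ger0_norm //; have := P1; lra. Qed.

Lemma bnd_q : bnd (fun t => RtoC (1 - ip t)) 1 0 0.
Proof. move=> t [h0 h1]; apply: nc_RtoC_le1; rewrite ger0_norm; have := P1; lra. Qed.

Lemma lip_p : lip (fun t => RtoC (ip t)) 1 0 0.
Proof.
move=> t t' _ _; rewrite RtoCB nc_RtoC /Q !expr0 !mulr1 mul1r; exact: coord_dd.
Qed.

Lemma lip_q : lip (fun t => RtoC (1 - ip t)) 1 0 0.
Proof.
move=> t t' _ _; rewrite RtoCB nc_RtoC /Q !expr0 !mulr1 mul1r.
have -> : 1 - ip t - (1 - ip t') = - (ip t - ip t') by ring.
rewrite normrN; exact: coord_dd.
Qed.

Lemma bnd_A w : bnd (Af w) 1 0 0.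
Proof. by move=> t _; exact: nc_expi_le. Qed.
Lemma bnd_B w : bnd (Bf w) 1 0 0.
Proof. by move=> t _; exact: nc_expi_le. Qed.

Lemma lip_A w : `|w| <= `|u| -> lip (Af w) 2 1 0.
Proof.
move=> hw t t' _ _; apply: (le_trans (expi_lip _ _)).
rewrite -mulrBr normrM /Q expr0 expr1 mulr1 /UU.
have := coord_dd t t' 1; have := normr_ge0 w; have := normr_ge0 (t 0 1 - t' 0 1).
rewrite /ialpha; nra.
Qed.

Lemma lip_B w : `|w| <= `|u| -> lip (Bf w) 2 1 0.
Proof.
move=> hw t t' _ _; apply: (le_trans (expi_lip _ _)).
rewrite -mulrBr normrM /Q expr0 expr1 mulr1 /UU.
have := coord_dd t t' 2; have := normr_ge0 w; have := normr_ge0 (t 0 2 - t' 0 2).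
rewrite /ibeta; nra.
Qed.

Lemma bnd_add' f g k1 k2 a1 b1 a2 b2 : bnd f k1 a1 b1 -> bnd g k2 a2 b2 ->
  bnd (fun t => f t + g t) (k1 + k2) (maxn a1 a2) (maxn b1 b2).
Proof.
move=> H1 H2; apply: bnd_add.
  by apply: (bnd_w H1); rewrite ?leq_maxl.
by apply: (bnd_w H2); rewrite ?leq_maxr.
Qed.

Lemma lip_add' f g k1 k2 a1 b1 a2 b2 : lip f k1 a1 b1 -> lip g k2 a2 b2 ->
  lip (fun t => f t + g t) (k1 + k2) (maxn a1 a2) (maxn b1 b2).
Proof.
move=> H1 H2; apply: lip_add.
  by apply: (lip_w H1); rewrite ?leq_maxl.
by apply: (lip_w H2); rewrite ?leq_maxr.
Qed.

Arguments bnd_add' {f g k1 k2 a1 b1 a2 b2}.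
Arguments lip_add' {f g k1 k2 a1 b1 a2 b2}.
Arguments nc_RtoC_le1 {x}.
Arguments nc_RtoC_leU {w x}.
Arguments lip_A {w}.
Arguments lip_B {w}.
Arguments lip_W {w k a b}.

Section Comp.
Variables (w : R) (hw : `|w| <= `|u|).

Let bi := bnd_cst (nc_iC_le).
Let li := lip_cst (iC R).
Let bc {x : R} (hx : `|x| <= 1) := bnd_cst (nc_RtoC_le1 hx).
Let bcu {x : R} (hx : `|x| <= 1) := bnd_cst (nc_RtoC_leU hw hx).

Lemma bl_DA (v : V) (hv : forall k, `|v 0 k| <= 1) :
  bnd (fun t => DA w t v) 1 1 0 /\ lip (fun t => DA w t v) 2 2 0.
Proof.
have B1 := bnd_mul bi (bnd_A w).
have L1 := lip_mul bi (bnd_A w) li (lip_A hw).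
have B2 := bnd_mul B1 (bcu (hv 1)).
have L2 := lip_mul B1 (bcu (hv 1)) L1 (lip_cst _).
by split; [exact: B2 | exact: L2].
Qed.
Arguments bl_DA {v}.



Lemma bl_DB (v : V) (hv : forall k, `|v 0 k| <= 1) :
  bnd (fun t => DB w t v) 1 1 0 /\ lip (fun t => DB w t v) 2 2 0.
Proof.
have B1 := bnd_mul bi (bnd_B w).
have L1 := lip_mul bi (bnd_B w) li (lip_B hw).
have B2 := bnd_mul B1 (bcu (hv 2)).
have L2 := lip_mul B1 (bcu (hv 2)) L1 (lip_cst _).
by split; [exact: B2 | exact: L2].
Qed.
Arguments bl_DB {v}.


Lemma bl_M : bnd (Mf w) 2 0 0 /\ lip (Mf w) 6 1 0.
Proof.
have B1 := bnd_mul bnd_p (bnd_A w).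
have L1 := lip_mul bnd_p (bnd_A w) lip_p (lip_A hw).
have B2 := bnd_mul bnd_q (bnd_B w).
have L2 := lip_mul bnd_q (bnd_B w) lip_q (lip_B hw).
by split; [by apply: (bnd_w (bnd_add' B1 B2)) | by apply: (lip_w (lip_add' L1 L2))].
Qed.

Lemma Nv (v : V) (hv : forall k, `|v 0 k| <= 1) : `|- v 0 0| <= 1.
Proof. by rewrite normrN. Qed.
Arguments Nv {v}.


Lemma bl_DM (v : V) (hv : forall k, `|v 0 k| <= 1) :
  bnd (fun t => DM w t v) 4 1 0 /\ lip (fun t => DM w t v) 12 2 0.
Proof.
have [BA LA] := bl_DA hv; have [BB LB] := bl_DB hv.
have B1 := bnd_mul (bc (hv 0)) (bnd_A w).
have L1 := lip_mul (bc (hv 0)) (bnd_A w) (lip_cst _) (lip_A hw).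
have B2 := bnd_mul bnd_p BA.
have L2 := lip_mul bnd_p BA lip_p LA.
have B3 := bnd_mul (bc (Nv hv)) (bnd_B w).
have L3 := lip_mul (bc (Nv hv)) (bnd_B w) (lip_cst _) (lip_B hw).
have B4 := bnd_mul bnd_q BB.
have L4 := lip_mul bnd_q BB lip_q LB.
split.
  by apply: (bnd_w (bnd_add' (bnd_add' B1 B2) (bnd_add' B3 B4))).
by apply: (lip_w (lip_add' (lip_add' L1 L2) (lip_add' L3 L4))).
Qed.
Arguments bl_DM {v}.


Lemma bl_D2A (v v' : V) (hv : forall k, `|v 0 k| <= 1) (hv' : forall k, `|v' 0 k| <= 1) :
  bnd (fun t => D2A w t v v') 1 2 0 /\ lip (fun t => D2A w t v v') 2 3 0.
Proof.
have [BA LA] := bl_DA hv'.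
have B1 := bnd_mul bi BA.
have L1 := lip_mul bi BA li LA.
have B2 := bnd_mul B1 (bcu (hv 1)).
have L2 := lip_mul B1 (bcu (hv 1)) L1 (lip_cst _).
by split; [exact: B2 | exact: L2].
Qed.
Arguments bl_D2A {v v'}.


Lemma bl_D2B (v v' : V) (hv : forall k, `|v 0 k| <= 1) (hv' : forall k, `|v' 0 k| <= 1) :
  bnd (fun t => D2B w t v v') 1 2 0 /\ lip (fun t => D2B w t v v') 2 3 0.
Proof.
have [BA LA] := bl_DB hv'.
have B1 := bnd_mul bi BA.
have L1 := lip_mul bi BA li LA.
have B2 := bnd_mul B1 (bcu (hv 2)).
have L2 := lip_mul B1 (bcu (hv 2)) L1 (lip_cst _).
by split; [exact: B2 | exact: L2].
Qed.
Arguments bl_D2B {v v'}.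


Lemma bl_D2M (v v' : V) (hv : forall k, `|v 0 k| <= 1) (hv' : forall k, `|v' 0 k| <= 1) :
  bnd (fun t => D2M w t v v') 6 2 0 /\ lip (fun t => D2M w t v v') 18 3 0.
Proof.
have [BAv LAv] := bl_DA hv; have [BBv LBv] := bl_DB hv.
have [BAw LAw] := bl_DA hv'; have [BBw LBw] := bl_DB hv'.
have [B2A L2A] := bl_D2A hv hv'; have [B2B L2B] := bl_D2B hv hv'.
have B1 := bnd_mul (bc (hv 0)) BAw.
have L1 := lip_mul (bc (hv 0)) BAw (lip_cst _) LAw.
have B2 := bnd_mul (bc (hv' 0)) BAv.
have L2 := lip_mul (bc (hv' 0)) BAv (lip_cst _) LAv.
have B3 := bnd_mul bnd_p B2A.
have L3 := lip_mul bnd_p B2A lip_p L2A.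
have B4 := bnd_mul (bc (Nv hv)) BBw.
have L4 := lip_mul (bc (Nv hv)) BBw (lip_cst _) LBw.
have B5 := bnd_mul (bc (Nv hv')) BBv.
have L5 := lip_mul (bc (Nv hv')) BBv (lip_cst _) LBv.
have B6 := bnd_mul bnd_q B2B.
have L6 := lip_mul bnd_q B2B lip_q L2B.
split.
  by apply: (bnd_w (bnd_add' (bnd_add' B1 (bnd_add' B2 B3)) (bnd_add' B4 (bnd_add' B5 B6)))).
by apply: (lip_w (lip_add' (lip_add' L1 (lip_add' L2 L3)) (lip_add' L4 (lip_add' L5 L6)))).
Qed.
Arguments bl_D2M {v v'}.


Lemma bl_W : bnd (Wf w) 1 0 1 /\ lip (Wf w) 6 1 2.
Proof. by have [_ LM] := bl_M; split; [exact: bnd_W | by apply: (lip_w (lip_W LM))]. Qed.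

Lemma bl_WW : bnd (fun t => Wf w t * Wf w t) 1 0 2 /\ lip (fun t => Wf w t * Wf w t) 12 1 3.
Proof.
have [B L] := bl_W.
by split; [by apply: (bnd_w (bnd_mul B B)) | by apply: (lip_w (lip_mul B B L L))].
Qed.

Lemma bl_W3 : bnd (fun t => Wf w t * Wf w t * Wf w t) 1 0 3 /\
              lip (fun t => Wf w t * Wf w t * Wf w t) 18 1 4.
Proof.
have [B L] := bl_W; have [B2 L2] := bl_WW.
by split; [by apply: (bnd_w (bnd_mul B2 B)) | by apply: (lip_w (lip_mul B2 B L2 L))].
Qed.

Lemma lip_DW (v : V) (hv : forall k, `|v 0 k| <= 1) :
  lip (fun t => DW w t v) 60 2 3.
Proof.
have [BD LD] := bl_DM hv; have [B2 L2] := bl_WW.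
by apply: (lip_w (lip_mul (bnd_opp BD) B2 (lip_opp LD) L2)).
Qed.

Lemma lip_D2W (v v' : V) (hv : forall k, `|v 0 k| <= 1) (hv' : forall k, `|v' 0 k| <= 1) :
  lip (fun t => D2W w t v v') 858 3 4.
Proof.
have [BD LD] := bl_D2M hv hv'; have [B2 L2] := bl_WW; have [B3 L3] := bl_W3.
have [Bv Lv] := bl_DM hv; have [Bw Lw] := bl_DM hv'.
have b2 : bnd (fun _ => (2 : R[i])) 2 0 0.
  apply: bnd_cst; rewrite /Q !expr0 !mulr1.
  have n1 : nc (1 : R[i]) = 1 by exact: Normc.normc1.
  rewrite -[(2 : R[i])]/(1 + 1 : R[i]).
  by apply: (le_trans (nc_D _ _)); rewrite n1.
have T1 := lip_mul (bnd_opp BD) B2 (lip_opp LD) L2.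
have Bx := bnd_mul b2 Bv.
have Lx := lip_mul b2 Bv (lip_cst _) Lv.
have By := bnd_mul Bx Bw.
have Ly := lip_mul Bx Bw Lx Lw.
have T2 := lip_mul By B3 Ly L3.
by apply: (lip_w (lip_add' T1 T2)).
Qed.

Lemma bnd_DW (v : V) (hv : forall k, `|v 0 k| <= 1) :
  bnd (fun t => DW w t v) 4 1 2.
Proof.
have [BD LD] := bl_DM hv; have [B2 L2] := bl_WW.
by apply: (bnd_w (bnd_mul (bnd_opp BD) B2)).
Qed.

Lemma bnd_D2W (v v' : V) (hv : forall k, `|v 0 k| <= 1) (hv' : forall k, `|v' 0 k| <= 1) :
  bnd (fun t => D2W w t v v') 38 2 3.
Proof.
have [BD LD] := bl_D2M hv hv'; have [B2 L2] := bl_WW; have [B3 L3] := bl_W3.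
have [Bv Lv] := bl_DM hv; have [Bw Lw] := bl_DM hv'.
have b2 : bnd (fun _ => (2 : R[i])) 2 0 0.
  apply: bnd_cst; rewrite /Q !expr0 !mulr1.
  have n1 : nc (1 : R[i]) = 1 by exact: Normc.normc1.
  rewrite -[(2 : R[i])]/(1 + 1 : R[i]).
  by apply: (le_trans (nc_D _ _)); rewrite n1.
by apply: (bnd_w (bnd_add' (bnd_mul (bnd_opp BD) B2) (bnd_mul (bnd_mul (bnd_mul b2 Bv) Bw) B3))).
Qed.
End Comp.

Arguments lip_DW {w} hw {v}.
Arguments bnd_DW {w} hw {v}.
Arguments lip_D2W {w} hw {v v'}.
Arguments bnd_D2W {w} hw {v v'}.

Lemma hw_u : `|u| <= `|u|. Proof. exact: lexx. Qed.
Lemma hw_Nu : `|- u| <= `|u|. Proof. by rewrite normrN. Qed.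

Lemma lip_dZ (x : R) (v : V) (hv : forall k, `|v 0 k| <= 1) :
  lip (fun t => dZ x u t v) 120 2 3.
Proof.
have c1 := bnd_cst (nc_expi_le (u * x)).
have c2 := bnd_cst (nc_expi_le (- u * x)).
have L1 := lip_mul c1 (bnd_DW hw_u hv) (lip_cst _) (lip_DW hw_u hv).
have L2 := lip_mul c2 (bnd_DW hw_Nu hv) (lip_cst _) (lip_DW hw_Nu hv).
by apply: (lip_w (lip_add' L1 (lip_opp L2))).
Qed.

Lemma lip_d2Z (x : R) (v v' : V) (hv : forall k, `|v 0 k| <= 1) (hv' : forall k, `|v' 0 k| <= 1) :
  lip (fun t => d2Z x u t v v') 1716 3 4.
Proof.
have c1 := bnd_cst (nc_expi_le (u * x)).
have c2 := bnd_cst (nc_expi_le (- u * x)).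
have L1 := lip_mul c1 (bnd_D2W hw_u hv hv') (lip_cst _) (lip_D2W hw_u hv hv').
have L2 := lip_mul c2 (bnd_D2W hw_Nu hv hv') (lip_cst _) (lip_D2W hw_Nu hv hv').
by apply: (lip_w (lip_add' L1 (lip_opp L2))).
Qed.
End B.

Section F.
Variable R : realType.
Local Notation V := 'rV[R]_3.

Lemma sqrt_add_le (x y : R) : 0 <= x -> 0 <= y ->
  Num.sqrt (x + y) <= Num.sqrt x + Num.sqrt y.
Proof.
move=> hx hy.
have sx := sqrtr_ge0 x; have sy := sqrtr_ge0 y.
rewrite -[X in _ <= X]ger0_norm ?addr_ge0 // -sqrtr_sqr ler_sqrt ?sqr_ge0 //.
rewrite sqrrD !sqr_sqrtr //; have := mulr_ge0 sx sy; lra.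
Qed.

Lemma sqrt_sum_le n (a : 'I_n -> R) : (forall i, 0 <= a i) ->
  Num.sqrt (\sum_i a i) <= \sum_i Num.sqrt (a i).
Proof.
elim: n a => [|n IH] a ha; first by rewrite !big_ord0 sqrtr0.
rewrite !big_ord_recr /=.
have h1 : 0 <= \sum_(i < n) a (widen_ord (leqnSn n) i) by apply: sumr_ge0 => i _; exact: ha.
apply: (le_trans (sqrt_add_le _ _ h1 (ha ord_max))).
by apply: lerD => //; apply: IH.
Qed.

Arguments sqrt_sum_le {n a}.

Lemma nc_cmod2 (z : R[i]) : nc z = Num.sqrt (cmod2 z).
Proof. by case: z. Qed.

Lemma cmod2_ge0 (z : R[i]) : 0 <= cmod2 z.
Proof. by rewrite /cmod2 addr_ge0 // sqr_ge0. Qed.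

Lemma e_le1 (j : 'I_3) : forall k, `|('e_j : V) 0 k| <= 1.
Proof. by move=> k; rewrite mxE; case: (_ && _); rewrite ?normr1 ?normr0. Qed.

Lemma hnorm_le (v : 'rV[R[i]]_3) L : (forall j, nc (v 0 j) <= L) -> hnorm v <= 3%:R * L.
Proof.
move=> H; rewrite /hnorm.
apply: (le_trans (sqrt_sum_le (fun i => cmod2_ge0 _))).
have -> : 3%:R * L = \sum_(j < 3) L by rewrite sumr_const card_ord mulr_natl.
by apply: ler_sum => j _; rewrite -nc_cmod2.
Qed.

Lemma fnorm_le (A : 'M[R[i]]_3) L : (forall j l, nc (A j l) <= L) -> fnorm A <= 9%:R * L.
Proof.
move=> H; rewrite /fnorm.
apply: (le_trans (sqrt_sum_le (fun i => sumr_ge0 _ (fun l _ => cmod2_ge0 _)))).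
have -> : 9%:R * L = \sum_(j < 3) (3%:R * L).
  by rewrite sumr_const card_ord; ring.
apply: ler_sum => j _; apply: (le_trans (sqrt_sum_le (fun l => cmod2_ge0 _))).
have -> : 3%:R * L = \sum_(l < 3) L by rewrite sumr_const card_ord mulr_natl.
by apply: ler_sum => l _; rewrite -nc_cmod2.
Qed.


Definition Cst : R := 3%:R * 120%:R * 2%:R + 9%:R * 1716%:R * 3%:R.

Lemma Cst_gt0 : 0 < Cst.
Proof. rewrite /Cst; lra. Qed.

Lemma num1 (u m d : R) : 0 < m -> 0 <= d ->
  3%:R * (120%:R * ((1 + `|u|) ^+ 2 * (m^-1) ^+ 3) * d)
  <= d * (Cst * (1 + `|u| + u ^+ 2) / (m ^+ 3)).
Proof.
move=> hm hd.
have hy : 0 <= (m ^+ 3)^-1 by rewrite invr_ge0 exprn_ge0 // ltW.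
rewrite exprVn -(real_normK (num_real u)).
set t := `|u|; set y := (m ^+ 3)^-1.
have ht : 0 <= t := normr_ge0 u.
have hdy := mulr_ge0 hd hy.
have -> : 3%:R * (120%:R * ((1 + t) ^+ 2 * y) * d) = (d * y) * (3%:R * 120%:R * (1 + t) ^+ 2) by ring.
have -> : d * (Cst * (1 + t + t ^+ 2) / m ^+ 3) = (d * y) * (Cst * (1 + t + t ^+ 2)).
  by rewrite /y; ring.
apply: ler_wpM2l => //.
have ht2 : 0 <= t ^+ 2 by rewrite exprn_ge0.
have -> : (1 + t) ^+ 2 = 1 + 2 * t + t ^+ 2 by ring.
rewrite /Cst; lra.
Qed.

Lemma num2 (u m d : R) : 0 < m -> 0 <= d ->
  9%:R * (1716%:R * ((1 + `|u|) ^+ 3 * (m^-1) ^+ 4) * d)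
  <= d * (Cst * (1 + `|u| + u ^+ 2 + `|u| ^+ 3) / (m ^+ 4)).
Proof.
move=> hm hd.
have hy : 0 <= (m ^+ 4)^-1 by rewrite invr_ge0 exprn_ge0 // ltW.
rewrite exprVn -(real_normK (num_real u)).
set t := `|u|; set y := (m ^+ 4)^-1.
have ht : 0 <= t := normr_ge0 u.
have hdy := mulr_ge0 hd hy.
have -> : 9%:R * (1716%:R * ((1 + t) ^+ 3 * y) * d) = (d * y) * (9%:R * 1716%:R * (1 + t) ^+ 3) by ring.
have -> : d * (Cst * (1 + t + t ^+ 2 + t ^+ 3) / m ^+ 4) = (d * y) * (Cst * (1 + t + t ^+ 2 + t ^+ 3)).
  by rewrite /y; ring.
apply: ler_wpM2l => //.
have ht2 : 0 <= t ^+ 2 by rewrite exprn_ge0.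
have ht3 : 0 <= t ^+ 3 by rewrite exprn_ge0.
have -> : (1 + t) ^+ 3 = 1 + 3 * t + 3 * t ^+ 2 + t ^+ 3 by ring.
rewrite /Cst; lra.
Qed.
End F.

Theorem lemma2 (R : realType) :
  exists C : R, 0 < C /\
  forall (Theta : set 'rV[R]_3) (P : R) (n : nat) (X : 'I_n -> R),
    compact Theta ->
    (forall th, Theta th -> 0 < ip th < 1 / 2 /\ ialpha th != ibeta th) ->
    P < 1 / 2 ->
    (forall th, Theta th -> ip th <= P) ->
    forall (u : R) (th th' : 'rV[R]_3) (k : 'I_n),
      Theta th -> Theta th' ->
      hnorm (grad (fun t => Zfun (X k) t u) th - grad (fun t => Zfun (X k) t u) th')
        <= enorm (th - th') * (C * (1 + `|u| + u ^+ 2) / (1 - 2 * P) ^+ 3)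
      /\
      fnorm (hess (fun t => Zfun (X k) t u) th - hess (fun t => Zfun (X k) t u) th')
        <= enorm (th - th') * (C * (1 + `|u| + u ^+ 2 + `|u| ^+ 3) / (1 - 2 * P) ^+ 4).
Proof.
exists (Cst R); split; first exact: Cst_gt0.
move=> Theta P n X _ HT HP HPle u th th' k Tth Tth'.
have [/andP [p0 p1] _] := HT th Tth.
have [/andP [p0' p1'] _] := HT th' Tth'.
have hP := HPle th Tth; have hP' := HPle th' Tth'.
have P0 : 0 <= P by lra.
have S1 : @SS R P th by split; [lra | exact: hP].
have S2 : @SS R P th' by split; [lra | exact: hP'].
have hm : 0 < 1 - 2 * P by lra.
have hd : 0 <= enorm (th - th') by exact: sqrtr_ge0.
split.
  apply: (le_trans (@hnorm_le R _ (120%:R * @Q R P u 2 3 * @dd R th th') _)).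
    move=> j; rewrite !mxE grad_Z // grad_Z //.
    exact: (@lip_dZ R P u P0 HP (X k) _ (@e_le1 R j) th th' S1 S2).
  by rewrite /Q /UU /iM /mm /dd; apply: num1.
apply: (le_trans (@fnorm_le R _ (1716%:R * @Q R P u 3 4 * @dd R th th') _)).
  move=> j l; rewrite !mxE hess_Z // hess_Z //.
  exact: (@lip_d2Z R P u P0 HP (X k) _ _ (@e_le1 R j) (@e_le1 R l) th th' S1 S2).
by rewrite /Q /UU /iM /mm /dd; apply: num2.
Qed.
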